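(* Let $\beta\in(1/2,1)$, $r>0$, assume the tail condition (T) and the coupling below, and suppose \[ \max_{q\in(0,1]}\Big(\tfrac{1+q}{2}-\alpha(q,r)-\beta\Big)<0 . \] Fix $t_1\in(0,1/2)$ and let $t_0=n^{-1}$. Then for every $\epsilon>0$ there exists $n_0=n_0(\epsilon)$ such that for all $n\ge n_0$, \[ \sup_{t\in(t_0,t_1)}\sqrt n\,\big|\mathbb E\tilde F^{(1)}(t)-\mathbb E\tilde F^{(0)}(t)\big|\,w(t)\le\epsilon . \]
   Context: $\epsilon_n=n^{-\beta}$. For each $n$ and $i\le n$, $G_{n,i}$ is a probability distribution on $(0,1)$ with $G_{n,i}(t)\ge t$. Tail condition (T): $\alpha:[0,1]\times(0,\infty)\to[0,\infty)$ is continuous, nondecreasing in $q$, nonincreasing in $r$, and there is $\delta_n\to0$ with $|-\log\Pr(X<n^{-q})-\alpha(q,r)\log n|\le\delta_n\log n$ for all $n$, $i\le n$, $q\in(0,1]$, $X\sim G_{n,i}$. Coupling: $I\subset\{1,\dots,n\}$ random with each $i$ included independently with probability $\epsilon_n$; $Q^{(0)}_1,\dots,Q^{(0)}_n$ i.i.d. $\mathrm{Unif}(0,1)$ independent of $I$; for $i\in I$, $Q^{(1)}_i\sim G_{n,i}$ independently of everything else; for $i\notin I$, $Q^{(1)}_i=Q^{(0)}_i$. For $h\in\{0,1\}$, $\tilde F^{(h)}(t)=\frac1n\sum_{i\in I}\mathbf 1(Q^{(h)}_i\le t)$; $\mathbb E$ is unconditional expectation; $w(t)=1/\sqrt{t(1-t)}$.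 *)

(* Defs.v *)
From HB Require Import structures.
From mathcomp Require Import all_boot all_order all_algebra.
From mathcomp Require Import all_classical all_reals all_analysis.
Set Implicit Arguments. Unset Strict Implicit. Unset Printing Implicit Defensive.
Import Order.TTheory GRing.Theory Num.Theory.
Import numFieldNormedType.Exports.
Local Open Scope classical_set_scope.
Local Open Scope ring_scope.

Definition mutually_independent {d} {T : measurableType d} {R : realType}
  (P : probability T R) (J : finType) (X : J -> T -> R) : Prop :=
  forall A : J -> set R, (forall j, measurable (A j)) ->
    fine (P (\bigcap_(j in [set: J]) (X j @^-1` A j))) =
    \prod_(j : J) fine (P (X j @^-1` A j)).

Definition cdfG {R : realType} (G : probability R R) (t : R) : R :=
  fine (G [set` `]-oo, t]]).

(* The tail condition (T) for the family G, with exponent profile alpha and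
   error sequence delta. (Pr(X < n^-q) must be > 0 for -log to be finite.) *)
Definition tail_condition {R : realType}
  (G : forall n : nat, 'I_n -> probability R R)
  (alpha : R -> R -> R) (r : R) (delta : nat -> R) : Prop :=
  forall (n : nat) (i : 'I_n) (q : R), (0 < n)%N -> 0 < q <= 1 ->
    let p := fine (G n i [set` `]-oo, (n%:R `^ (- q))[]) in
    0 < p /\
    `| - ln p - alpha q r * ln n%:R | <= delta n * ln n%:R.

Definition Q1 {T : Type} {R : realType} (n : nat) (I : T -> {set 'I_n})
  (Q0 W : 'I_n -> T -> R) (i : 'I_n) (w : T) : R :=
  if i \in I w then W i w else Q0 i w.

Definition Ftilde {T : Type} {R : realType} (n : nat) (I : T -> {set 'I_n})
  (Q : 'I_n -> T -> R) (t : R) (w : T) : R :=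
  n%:R^-1 * \sum_(i < n | i \in I w) (Q i w <= t)%R%:R.

Definition coupling_family {T : Type} {R : realType} (n : nat)
  (I : T -> {set 'I_n}) (Q0 W : 'I_n -> T -> R) :
  ('I_n + 'I_n + 'I_n)%type -> T -> R :=
  fun k => match k with
           | inl (inl i) => fun w => (i \in I w)%:R
           | inl (inr i) => Q0 i
           | inr i => W i
           end.

Definition wt {R : realType} (t : R) : R := (Num.sqrt (t * (1 - t)))^-1.

(* Main.v *)
Require Import Defs.
From HB Require Import structures.
From mathcomp Require Import all_boot all_order all_algebra.
From mathcomp Require Import all_classical all_reals all_analysis.
From mathcomp Require Import ring lra.
Import Order.TTheory GRing.Theory Num.Theory.
Import numFieldNormedType.Exports.
Local Open Scope classical_set_scope.
Local Open Scope ring_scope.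
Lemma fineP {d} {T : measurableType d} {R : realType} (P : probability T R) (A : set T) :
  measurable A -> P A = (fine (P A))%:E.
Proof. by move=> mA; rewrite fineK // fin_num_measure. Qed.

Lemma indep2 {d} {T : measurableType d} {R : realType} (P : probability T R)
  (J : finType) (X : J -> T -> R) (j1 j2 : J) (A1 A2 : set R) :
  j1 != j2 -> measurable A1 -> measurable A2 -> mutually_independent P X ->
  fine (P (X j1 @^-1` A1 `&` X j2 @^-1` A2)) =
  fine (P (X j1 @^-1` A1)) * fine (P (X j2 @^-1` A2)).
Proof.
move=> j12 m1 m2 ind.
have j21 : j2 != j1 by rewrite eq_sym.
pose A j := if j == j1 then A1 else if j == j2 then A2 else setT.
have mA j : measurable (A j) by rewrite /A; case: ifP => //; case: ifP.
have := ind A mA.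
have -> : \bigcap_(j in [set: J]) X j @^-1` A j = X j1 @^-1` A1 `&` X j2 @^-1` A2.
  apply/seteqP; split => w.
    move=> H; split.
      by have := H j1 I; rewrite /A eqxx.
    by have := H j2 I; rewrite /A (negbTE j21) eqxx.
  move=> [h1 h2] j _; rewrite /A; case: ifP => [/eqP->//|_]; case: ifP => [/eqP->//|_]//.
move=> ->; rewrite (bigD1 j1) //= (bigD1 j2) ?(eq_sym j2) //= big1 ?mulr1.
  by rewrite /A eqxx (negbTE j21) eqxx.
move=> j /andP[n1 n2]; rewrite /A (negbTE n1) (negbTE n2) preimage_setT probability_setT //.
Qed.

Lemma E_Ftilde {d} {T : measurableType d} {R : realType} (P : probability T R)
  (n : nat) (In : T -> {set 'I_n}) (Q : 'I_n -> T -> R) (t : R) :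
  (forall i, measurable ([set w | i \in In w] `&` Q i @^-1` [set` `]-oo, t]])) ->
  ('E_P[Ftilde In Q t])%E = (\sum_(i < n) n%:R^-1 *
     fine (P ([set w | i \in In w] `&` Q i @^-1` [set` `]-oo, t]])))%:E.
Proof.
move=> mS.
pose S i := [set w | i \in In w] `&` Q i @^-1` [set` `]-oo, t]].
have e w : (Ftilde In Q t w)%:E = (\sum_(i < n) (n%:R^-1)%:E * (\1_(S i) w)%:E)%E.
  rewrite /Ftilde sumEFin; congr EFin; rewrite big_mkcond mulr_sumr.
  apply: eq_bigr => i _; rewrite indicE.
  have -> : (w \in S i) = (i \in In w) && (Q i w <= t).
    apply/idP/idP => [/set_mem [/= h1 h2]|/andP[h1 h2]].
      by rewrite h1 /=; move: h2; rewrite /= in_itv.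
    by apply/mem_set; split => //=; rewrite in_itv /= h2.
  by case: (i \in In w) => //=; rewrite mulr0.
rewrite unlock.
under eq_integral => w _ do rewrite e.
rewrite ge0_integral_sum //; last first.
- by move=> i; apply: measurable_funeM; apply/measurable_realfun.measurable_EFinP; apply: measurable_realfun.measurable_indic; exact: mS.
rewrite -sumEFin; apply: eq_bigr => i _.
rewrite (ge0_integralZl _ measurableT).
- rewrite integral_indic; last exact: mS.
  by rewrite setIT EFinM -(fineP P (S i) (mS i)).
all: try (by apply/measurable_realfun.measurable_EFinP; apply: measurable_realfun.measurable_indic; exact: mS).
- exact: measurableT.
- by move=> w _; rewrite lee_fin indicE ler0n.
- by rewrite lee_fin invr_ge0.
Qed.

Lemma key {d} {T : measurableType d} {R : realType} (P : probability T R)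
  (n : nat) (In : T -> {set 'I_n}) (Q0 W : 'I_n -> T -> R)
  (Gi : 'I_n -> probability R R) (beta t : R) :
  0 < t < 1 ->
  (forall k, measurable_fun setT (coupling_family In Q0 W k)) ->
  mutually_independent P (coupling_family In Q0 W) ->
  (forall i, P [set w | i \in In w] = ((n%:R : R) `^ (- beta))%:E) ->
  (forall i A, measurable A ->
     P (Q0 i @^-1` A) = lebesgue_measure (A `&` [set` `]0, 1[])) ->
  (forall i A, measurable A -> P (W i @^-1` A) = Gi i A) ->
  fine ('E_P[Ftilde In (Q1 In Q0 W) t])%E - fine ('E_P[Ftilde In Q0 t])%E =
  \sum_(i < n) n%:R^-1 * ((n%:R : R) `^ (- beta) * (cdfG (Gi i) t - t)).
Proof.
move=> /andP[t0 t1] mX ind PI PQ0 PW.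
pose A : set R := [set` `]-oo, t]].
have mA : measurable A by exact: measurable_itv.
have HI i : [set w | i \in In w] = coupling_family In Q0 W (inl (inl i)) @^-1` [set 1].
  apply/seteqP; split => w /=; rewrite /preimage /=; case: (i \in In w) => //=.
  by move/eqP; rewrite eq_sym oner_eq0.
have mI i : measurable [set w | i \in In w].
  by rewrite HI -[X in measurable X]setTI; apply: mX => //; exact: measurable_set1.
have mXA k : measurable (coupling_family In Q0 W k @^-1` A).
  by rewrite -[X in measurable X]setTI; apply: mX.
have H1 i : [set w | i \in In w] `&` Q1 In Q0 W i @^-1` A =
            [set w | i \in In w] `&` coupling_family In Q0 W (inr i) @^-1` A.
  apply/seteqP; split => w [/= h1 h2]; split => //; move: h2; rewrite /preimage /= /Q1 h1 //.
have H0 i : [set w | i \in In w] `&` Q0 i @^-1` A =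
            [set w | i \in In w] `&` coupling_family In Q0 W (inl (inr i)) @^-1` A.
  by [].
rewrite !E_Ftilde; last first.
- by move=> i; have := H1 i; rewrite /A => ->; apply: measurableI.
- by move=> i; exact: (measurableI _ _ (mI i) (mXA (inl (inr i)))).
rewrite /= -sumrB; apply: eq_bigr => i _; rewrite -mulrBr; congr (_ * _).
rewrite -/A H1 H0 !HI !indep2 //.
rewrite -!HI PI /= -mulrBr; congr (_ * (_ - _)).
  by rewrite PW.
rewrite PQ0 //.
have -> : A `&` [set` `]0, 1[] = [set` `]0, t]].
  apply/seteqP; split => x /=; rewrite !in_itv /=.
    by move=> [h1 /andP[h2 h3]]; move: h1; rewrite /A /= in_itv /= => ->; rewrite h2.
  move=> /andP[h1 h2]; split; first by rewrite /A /= in_itv /= h2.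
  rewrite h1 /=.
  exact: le_lt_trans h2 t1.
by rewrite lebesgue_measure_itv /= lte_fin t0 /= oppr0 addr0.
Qed.

Lemma sqrt_expR (R : realType) (x : R) : Num.sqrt (expR x) = expR (x / 2).
Proof.
have -> : expR x = expR (x / 2) ^+ 2.
  by rewrite expr2 -expRD; congr expR; field.
by rewrite sqrtr_sqr ger0_norm // expR_ge0.
Qed.

Lemma wt_le (R : realType) (t : R) : 0 < t -> t < 1 / 2 ->
  wt t <= 2 * expR (- (ln t / 2)).
Proof.
move=> t0 t12.
have et : expR (ln t) = t by rewrite lnK // posrE.
set s := expR (ln t / 2).
have s0 : 0 < s by rewrite expR_gt0.
have s2 : s ^+ 2 = t by rewrite -et /s expr2 -expRD; congr expR; field.
rewrite expRN -/s /wt.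
have h : s / 2 <= Num.sqrt (t * (1 - t)).
  have -> : s / 2 = Num.sqrt ((s / 2) ^+ 2) by rewrite sqrtr_sqr ger0_norm // divr_ge0 // ltW.
  apply: ler_wsqrtr; rewrite expr_div_n s2; nra.
have h0 : 0 < s / 2 by rewrite divr_gt0.
apply: (@le_trans _ _ ((s / 2)^-1)).
  by rewrite lef_pV2 ?posrE // (lt_le_trans h0 h).
by rewrite invf_div.
Qed.

Lemma powR_exp (R : realType) (a x : R) : 0 < a -> a `^ x = expR (x * ln a).
Proof. by move=> a0; rewrite /powR gt_eqF. Qed.

Lemma anal (R : realType) (n : nat) (beta eta c dl t g : R)
  (alpha : R -> R) (gq : R -> R) :
  (2 <= n)%N -> 0 < c -> c <= eta -> c <= beta - 1 / 2 -> dl <= c / 4 ->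
  n%:R^-1 < t -> t < 1 / 2 -> 0 <= g -> g <= 1 ->
  (forall q, 0 < q <= 1 -> (1 + q) / 2 - alpha q - beta <= - eta) ->
  (forall q, 0 < q <= 1 -> t < n%:R `^ (- q) -> g <= gq q) ->
  (forall q, 0 < q <= 1 -> 0 < gq q /\
      `| - ln (gq q) - alpha q * ln n%:R | <= dl * ln n%:R) ->
  Num.sqrt n%:R * (n%:R `^ (- beta) * g) * wt t <= 2 * expR (- (c / 4) * ln n%:R).
Proof.
move=> n2 c0 ce cb dlc tn t12 g0 g1 Heta Hmono Htail.
have n1 : (1 : R) < n%:R by rewrite ltr1n.
have npos : (0 : R) < n%:R by rewrite (lt_trans _ n1).
set L := ln n%:R.
have L0 : 0 < L by exact: ln_gt0.
have t0 : 0 < t by apply: lt_trans tn; rewrite invr_gt0.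
set lt := ln t.
have et : expR lt = t by rewrite lnK // posrE.
have en : expR L = n%:R by rewrite lnK // posrE.
have ltL : - L < lt.
  rewrite -ltr_expR et expRN en; exact: tn.
have sqn : Num.sqrt n%:R = expR (L / 2) by rewrite -en sqrt_expR.
have pb : n%:R `^ (- beta) = expR (- beta * L) by rewrite powR_exp.
have hw := @wt_le R t t0 t12.
have w0 : 0 <= wt t by rewrite /wt invr_ge0 sqrtr_ge0.
rewrite sqn pb.
suff [e [ge He]] : exists e, g <= expR e /\ L / 2 - beta * L + e - lt / 2 <= - (c / 4) * L.
  apply: (@le_trans _ _ (expR (L / 2) * (expR (- beta * L) * expR e) * (2 * expR (- (lt / 2))))).
    apply: ler_pM => //.
      by rewrite mulr_ge0 // ?expR_ge0 // mulr_ge0 // expR_ge0.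
    apply: ler_pM => //; first by rewrite mulr_ge0 // expR_ge0.
    by apply: ler_pM => //; rewrite expR_ge0.
  rewrite mulrCA -!expRD ler_pM2l // ler_expR.
  by move: He; rewrite mulNr; lra.
have [hA|hB] := leP (- (c * L)) lt.
  exists 0; split; first by rewrite expR0.
  have : c * L <= (beta - 1 / 2) * L by rewrite ler_pM2r.
  have : 0 < c * L by rewrite mulr_gt0.
  rewrite mulNr; lra.
set q := - (lt + c * L) / L.
have qL : q * L = - (lt + c * L) by rewrite /q mulrVK // unitfE gt_eqF.
have q0 : 0 < q by rewrite /q divr_gt0 // oppr_gt0 ; lra.
have q1 : q <= 1.
  rewrite /q ler_pdivrMr // mul1r.
  have : 0 < c * L by rewrite mulr_gt0.
  lra.
have q01 : 0 < q <= 1 by rewrite q0 q1.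
have [p0 ptail] := Htail q q01.
exists ((dl - alpha q) * L); split.
  apply: (le_trans (Hmono q q01 _)).
    rewrite powR_exp // -/L mulNr qL opprK -et ltr_expR.
    have : 0 < c * L by rewrite mulr_gt0.
    lra.
  rewrite -[gq q]lnK ?posrE // ler_expR.
  move: ptail; rewrite -/L => /ler_normlP [h1 h2].
  rewrite mulrBl; lra.
have h1 : ((1 + q) / 2 - alpha q - beta) * L <= - eta * L by rewrite ler_pM2r // Heta.
have h2 : dl * L <= c / 4 * L by rewrite ler_pM2r.
have h3 : c * L <= eta * L by rewrite ler_pM2r.
have : 0 < c * L by rewrite mulr_gt0.
have e1 : ((1 + q) / 2 - alpha q - beta) * L = L / 2 + (q * L) / 2 - alpha q * L - beta * L by ring.
rewrite e1 qL in h1.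
rewrite mulrBl; lra.
Qed.

Theorem lemma12 (R : realType) (beta r : R)
  (alpha : R -> R -> R) (delta : nat -> R)
  (G : forall n : nat, 'I_n -> probability R R)
  (d : measure_display) (T : nat -> measurableType d)
  (P : forall n : nat, probability (T n) R)
  (I : forall n : nat, T n -> {set 'I_n})
  (Q0 W : forall n : nat, 'I_n -> T n -> R)
  (t1 : R) :
  (* parameters *)
  1 / 2 < beta < 1 -> 0 < r ->
  (* the laws G_{n,i}: probabilities on (0,1) with G(t) >= t *)
  (forall n (i : 'I_n), G n i [set` `]0, 1[] = 1%E) ->
  (forall n (i : 'I_n) (t : R), 0 < t < 1 -> t <= cdfG (G n i) t) ->
  (* properties of alpha *)
  {within [set p : R * R | 0 <= p.1 <= 1 /\ 0 < p.2],
     continuous (fun p : R * R => alpha p.1 p.2)} ->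
  (forall q r', 0 <= q <= 1 -> 0 < r' -> 0 <= alpha q r') ->
  (forall q q' r', 0 <= q <= 1 -> 0 <= q' <= 1 -> 0 < r' -> q <= q' ->
     alpha q r' <= alpha q' r') ->
  (forall q r' r'', 0 <= q <= 1 -> 0 < r' -> 0 < r'' -> r' <= r'' ->
     alpha q r'' <= alpha q r') ->
  (* tail condition (T) *)
  delta @ \oo --> 0 ->
  tail_condition G alpha r delta ->
  (* max_{q in (0,1]} ((1+q)/2 - alpha(q,r) - beta) < 0 *)
  (exists eta : R, 0 < eta /\
     forall q : R, 0 < q <= 1 -> (1 + q) / 2 - alpha q r - beta <= - eta) ->
  (* coupling, for every n >= 1 *)
  (forall n (k : 'I_n + 'I_n + 'I_n),
     measurable_fun setT (coupling_family (I n) (Q0 n) (W n) k)) ->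
  (forall n, (0 < n)%N ->
     mutually_independent (P n) (coupling_family (I n) (Q0 n) (W n))) ->
  (forall n (i : 'I_n), (0 < n)%N ->
     P n [set w | i \in I n w] = ((n%:R : R) `^ (- beta))%:E) ->
  (forall n (i : 'I_n) (A : set R), (0 < n)%N -> measurable A ->
     P n (Q0 n i @^-1` A) = lebesgue_measure (A `&` [set` `]0, 1[])) ->
  (forall n (i : 'I_n) (A : set R), (0 < n)%N -> measurable A ->
     P n (W n i @^-1` A) = G n i A) ->
  0 < t1 < 1 / 2 ->
  forall eps : R, 0 < eps ->
  exists n0 : nat, forall n : nat, (n0 <= n)%N -> (0 < n)%N ->
    forall t : R, (n%:R)^-1 < t < t1 ->
      Num.sqrt n%:R *
        `| fine ('E_(P n)[Ftilde (I n) (Q1 (I n) (Q0 n) (W n)) t])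
         - fine ('E_(P n)[Ftilde (I n) (Q0 n) t]) | * wt t <= eps.
Proof.
move=> /andP[b1 b2] r0 G01 Gt _ _ _ _ delta0 Htc [eta [eta0 Heta]] mX ind PI PQ0 PW
  /andP[t10 t12] eps eps0.
set c := Num.min eta (beta - 1 / 2).
have c0 : 0 < c by rewrite lt_min eta0 subr_gt0.
have [ce cb] : c <= eta /\ c <= beta - 1 / 2.
  by have := lexx c; rewrite {2}/c le_min => /andP[].
move/cvgr0_norm_le: delta0 => Hd.
have [N1 _ HN1] := Hd _ (divr_gt0 c0 (ltr0n _ 4)).
set M := ln (2 / eps) * (4 / c).
set N2 := (Num.truncn (expR M)).+1.
exists (maxn (maxn N1 N2) 2) => n; rewrite !geq_max => /andP[/andP[nN1 nN2] n2] n0 t /andP[tn tt1].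
have np : (0 : R) < n%:R by rewrite ltr0n.
have t0 : 0 < t by apply: lt_trans tn; rewrite invr_gt0.
have tl12 : t < 1 / 2 by apply: lt_trans tt1 t12.
have t01 : 0 < t < 1 by rewrite t0 /=; apply: (lt_trans tl12); lra.
rewrite (key (P n) n (I n) (Q0 n) (W n) (G n) beta t t01 (mX n) (ind n n0)
  (fun i => PI n i n0) (fun i A mA => PQ0 n i A n0 mA) (fun i A mA => PW n i A n0 mA)).
set B := 2 * expR (- (c / 4) * ln n%:R).
have dl : delta n <= c / 4 by apply: le_trans (ler_norm _) (HN1 n nN1).
have Hi : forall i : 'I_n,
    Num.sqrt n%:R * (n%:R `^ (- beta) * (cdfG (G n i) t - t)) * wt t <= B.
  move=> i.
  have g0 : 0 <= cdfG (G n i) t by rewrite /cdfG fine_ge0 // measure_ge0.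
  have g1 : cdfG (G n i) t <= 1.
    rewrite /cdfG -[X in _ <= X]/(fine 1%E); apply: fine_le => //.
      by rewrite fin_num_measure //; exact: measurable_itv.
    by apply: probability_le1; exact: measurable_itv.
  have w0 : 0 <= wt t by rewrite /wt invr_ge0 sqrtr_ge0.
  apply: le_trans (@anal _ n beta eta c (delta n) t _ (fun q => alpha q r)
      (fun q => fine (G n i [set` `]-oo, (n%:R `^ (- q))[])) n2 c0 ce cb dl tn tl12 g0 g1 _ _ _).
  - apply: ler_wpM2r => //; apply: ler_wpM2l; first exact: sqrtr_ge0.
    apply: ler_wpM2l; first exact: powR_ge0.
    by rewrite lerBlDr lerDl ltW.
  - by move=> q q01; exact: Heta.
  - move=> q q01 tq; rewrite /cdfG; apply: fine_le.
    + by rewrite fin_num_measure //; exact: measurable_itv.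
    + by rewrite fin_num_measure //; exact: measurable_itv.
    apply: le_measure; rewrite ?inE; try exact: measurable_itv.
    move=> x /=; rewrite !in_itv /= => xt; exact: le_lt_trans xt tq.
  - move=> q q01; have := Htc n i q n0 q01; rewrite /=; by [].
have HB : B <= eps.
  have nM : expR M < n%:R.
    apply: lt_le_trans (truncnS_gt _) _; rewrite ler_nat; exact: nN2.
  have lM : M <= ln n%:R by rewrite -ler_expR lnK ?posrE // ltW.
  rewrite /B.
  have : expR (- (c / 4) * ln n%:R) <= expR (- (c / 4) * M).
    by rewrite ler_expR mulNr mulNr lerN2 ler_pM2l // divr_gt0.
  have -> : - (c / 4) * M = - ln (2 / eps) by rewrite /M; field; rewrite gt_eqF.
  rewrite expRN lnK ?posrE ?divr_gt0 // invf_div => h.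
  have : 2 * expR (- (c / 4) * ln n%:R) <= 2 * (eps / 2) by rewrite ler_pM2l.
  move=> h'; lra.
have hs : 0 <= \sum_(i < n) n%:R^-1 * (n%:R `^ (- beta) * (cdfG (G n i) t - t)).
  apply: sumr_ge0 => i _; rewrite mulr_ge0 ?invr_ge0 // mulr_ge0 ?powR_ge0 //.
  by rewrite subr_ge0; apply: Gt.
rewrite ger0_norm // mulr_sumr mulr_suml.
apply: le_trans (_ : \sum_(i < n) n%:R^-1 * B <= _).
  apply: ler_sum => i _.
  have -> : Num.sqrt n%:R * (n%:R^-1 * (n%:R `^ (- beta) * (cdfG (G n i) t - t))) * wt t
    = n%:R^-1 * (Num.sqrt n%:R * (n%:R `^ (- beta) * (cdfG (G n i) t - t)) * wt t) by ring.
  by apply: ler_wpM2l; [rewrite invr_ge0 ltW | exact: Hi].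
rewrite sumr_const card_ord -[(_ * B) *+ n]mulr_natl mulrA mulfV ?mul1r //.
by rewrite gt_eqF.
Qed.
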